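(* On the noncommutative space $\mathbb{R}^4_\theta$ described in the context, the pair $(g,(\nabla,\sigma))$ is a Riemannian structure on the differential calculus $(\Omega^1_A,\mathrm{d})$.
   Context: Let $\theta\in\mathbb{R}$ and $R=(R^{ab})$ the $4\times4$ matrix (row $a$, column $b$) with rows $(1,e^{-i\theta},1,e^{i\theta})$, $(e^{i\theta},1,e^{-i\theta},1)$, $(1,e^{i\theta},1,e^{-i\theta})$, $(e^{-i\theta},1,e^{i\theta},1)$. $A=\mathbb{C}\langle z^1,\dots,z^4\rangle/(z^iz^j-R^{ji}z^jz^i)$; $\Omega^1_A=\bigoplus_iA\,\mathrm{d}z^i$ free left module with $\mathrm{d}z^i\,z^j=R^{ji}z^j\mathrm{d}z^i$, $\mathrm{d}z^i$ the image of $z^i$ under the Leibniz extension $\mathrm{d}$. With $P$ the matrix with rows $(0,0,1,0),(0,0,0,1),(1,0,0,0),(0,1,0,0)$, $(g_{ij})=\tfrac12P$, $(g^{ij})=2P$: metric $g=\sum g_{ij}\mathrm{d}z^i\otimes_A\mathrm{d}z^j$, inverse metric $g^{-1}(\mathrm{d}z^i\otimes_A\mathrm{d}z^j)=g^{ij}$ (left $A$-linear). $\nabla(\sum_ia_i\mathrm{d}z^i)=\sum_i\mathrm{d}a_i\otimes_A\mathrm{d}z^i$; $\sigma$ left $A$-linear with $\sigma(\mathrm{d}z^i\otimes_A\mathrm{d}z^j)=R^{ji}\mathrm{d}z^j\otimes_A\mathrm{d}z^i$. A Riemannian structure on $(\Omega^1_A,\mathrm{d})$ is a pair of a metric $g$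 (bimodule map $A\to\Omega^1_A\otimes_A\Omega^1_A$ with inverse bimodule map $g^{-1}$ satisfying $\sum_\alpha g^{-1}(\omega\otimes g^\alpha)g_\alpha=\omega=\sum_\alpha g^\alpha g^{-1}(g_\alpha\otimes\omega)$, $g(1)=\sum g^\alpha\otimes g_\alpha$) and a bimodule connection $(\nabla,\sigma)$ on $\Omega^1_A$ (left and right Leibniz rules $\nabla(a\omega)=a\nabla\omega+\mathrm{d}a\otimes\omega$, $\nabla(\omega a)=\nabla(\omega)a+\sigma(\omega\otimes\mathrm{d}a)$, $\sigma$ a bimodule isomorphism) such that $g^{-1}\circ\sigma=g^{-1}$ and $(\mathrm{id}\otimes_Ag^{-1})\circ\nabla^\otimes=\mathrm{d}\circ g^{-1}$ on $\Omega^1_A\otimes_A\Omega^1_A$, where $\nabla^\otimes(\omega\otimes\zeta)=\nabla(\omega)\otimes\zeta+(\sigma\otimes\mathrm{id})(\omega\otimes\nabla\zeta)$. *)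

(* Defs.v *)
From HB Require Import structures.
From mathcomp Require Import all_boot all_order all_algebra.
From mathcomp Require Import reals trigo.
From mathcomp Require Import complex.

Set Implicit Arguments.
Unset Strict Implicit.
Unset Printing Implicit Defensive.

Import Order.TTheory GRing.Theory Num.Theory.
Local Open Scope ring_scope.

(* The constants of R^4_theta.  Indices a, b : 'I_4 stand for 1..4.          *)

Section Constants.
Variable R : realType.

Definition expi (t : R) : R[i] := Complex (cos t) (sin t).

Definition Rth (t : R) (a b : 'I_4) : R[i] :=
  let e := expi t in let e' := expi (- t) in
  match nat_of_ord a, nat_of_ord b with
  | 0, 0 => 1 | 0, 1 => e' | 0, 2 => 1 | 0, _ => e
  | 1, 0 => e | 1, 1 => 1 | 1, 2 => e' | 1, _ => 1
  | 2, 0 => 1 | 2, 1 => e | 2, 2 => 1 | 2, _ => e'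
  | _, 0 => e' | _, 1 => 1 | _, 2 => e | _, _ => 1
  end.

Definition Pmat (a b : 'I_4) : R[i] :=
  if nat_of_ord b == ((nat_of_ord a + 2) %% 4)%N then 1 else 0.

Definition gl (a b : 'I_4) : R[i] := 2^-1 * Pmat a b.
Definition gu (a b : 'I_4) : R[i] := 2 * Pmat a b.

End Constants.

Section Algebra.
Variable K : fieldType.

Definition is_alg_hom (A B : algType K) (f : A -> B) : Prop :=
  [/\ forall a b, f (a + b) = f a + f b,
      forall (c : K) a, f (c *: a) = c *: f a,
      forall a b, f (a * b) = f a * f b
    & f 1 = 1].

Definition satisfies_rel (Rm : 'I_4 -> 'I_4 -> K) (B : algType K)
  (w : 'I_4 -> B) : Prop :=
  forall i j, w i * w j = Rm j i *: (w j * w i).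

(* (A, z) is the algebra C<z^1..z^4>/(z^i z^j - R^{ji} z^j z^i): it satisfies
   the relations and is universal (initial) among algebras with four
   elements satisfying the relations. *)
Definition is_presentation (Rm : 'I_4 -> 'I_4 -> K) (A : algType K)
  (z : 'I_4 -> A) : Prop :=
  satisfies_rel Rm z /\
  forall (B : algType K) (w : 'I_4 -> B), satisfies_rel Rm w ->
    (exists f : A -> B, is_alg_hom f /\ forall i, f (z i) = w i) /\
    (forall f g : A -> B, is_alg_hom f -> is_alg_hom g ->
       (forall i, f (z i) = g (z i)) -> forall a, f a = g a).

(* A consequence of the universal property (z generates A), recorded
   separately for convenience. *)
Definition generated_by (A : algType K) (z : 'I_4 -> A) : Prop :=
  forall P : A -> Prop,
    P 1 -> (forall a b, P a -> P b -> P (a + b)) ->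
    (forall (c : K) a, P a -> P (c *: a)) ->
    (forall i a, P a -> P (z i * a)) -> forall a, P a.

End Algebra.

(*  Om  = Omega^1_A : omega = sum_i omega_i dz^i            ('I_4 -> A)      *)
(*  T2  = Omega^1 (x)_A Omega^1 : sum T_ij dz^i (x) dz^j      ('I_4^2 -> A)    *)
(*  T3  = Omega^1 (x)_A Omega^1 (x)_A Omega^1                 ('I_4^3 -> A)    *)
(* rho i is the algebra map with dz^i b = rho_i(b) dz^i, i.e.                *)
(*  rho_i(z^j) = R^{ji} z^j  (from dz^i z^j = R^{ji} z^j dz^i).              *)

Section Calculus.
Variables (K : fieldType) (A : algType K).
Variable rho : 'I_4 -> A -> A.

Definition Om := 'I_4 -> A.
Definition T2 := 'I_4 -> 'I_4 -> A.
Definition T3 := 'I_4 -> 'I_4 -> 'I_4 -> A.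

Definition addO (w v : Om) : Om := fun i => w i + v i.
Definition scO (c : K) (w : Om) : Om := fun i => c *: w i.
Definition lactO (a : A) (w : Om) : Om := fun i => a * w i.
Definition ractO (w : Om) (b : A) : Om := fun i => w i * rho i b.
Definition dz (i : 'I_4) : Om := fun k => (k == i)%:R.
Definition sumO (n : nat) (F : 'I_n -> Om) : Om := fun k => \sum_(i < n) F i k.

Definition addT (s t : T2) : T2 := fun i j => s i j + t i j.
Definition lactT (a : A) (t : T2) : T2 := fun i j => a * t i j.
Definition ractT (t : T2) (b : A) : T2 := fun i j => t i j * rho i (rho j b).
(* omega (x) zeta, using  omega_i dz^i (x) zeta_j dz^j
                          = omega_i rho_i(zeta_j) dz^i (x) dz^j *)
Definition tens (w v : Om) : T2 := fun i j => w i * rho i (v j).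

Definition addT3 (X Y : T3) : T3 := fun i j k => X i j k + Y i j k.
Definition tensL (t : T2) (v : Om) : T3 :=
  fun i j k => t i j * rho i (rho j (v k)).
Definition tensR (w : Om) (t : T2) : T3 :=
  fun i j k => w i * rho i (t j k).

Definition is_Kadditive_OA (f : A -> Om) :=
  (forall a b, f (a + b) = addO (f a) (f b)) /\
  (forall (c : K) a, f (c *: a) = scO c (f a)).

Definition is_leibniz_ext (z : 'I_4 -> A) (d : A -> Om) : Prop :=
  [/\ is_Kadditive_OA d,
      forall a b, d (a * b) = addO (lactO a (d b)) (ractO (d a) b)
    & forall i, d (z i) = dz i].

Variables (Rm gl gu : 'I_4 -> 'I_4 -> K).
Variable d : A -> Om.

Definition gmet (a : A) : T2 := fun i j => a * (gl i j)%:A.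
(* inverse metric, left A-linear, g^{-1}(dz^i (x) dz^j) = g^{ij} *)
Definition ginv (t : T2) : A := \sum_(i < 4) \sum_(j < 4) t i j * (gu i j)%:A.
(* sigma, left A-linear, sigma(dz^i (x) dz^j) = R^{ji} dz^j (x) dz^i *)
Definition sigma (t : T2) : T2 := fun k l => t l k * (Rm k l)%:A.
Definition nabla (w : Om) : T2 :=
  fun k l => \sum_(i < 4) tens (d (w i)) (dz i) k l.
(* sigma (x) id, left A-linear:
   (sigma (x) id)(dz^i (x) dz^j (x) dz^k) = R^{ji} dz^j (x) dz^i (x) dz^k *)
Definition sigma_id (X : T3) : T3 := fun k l m => X l k m * (Rm k l)%:A.
(* id (x) g^{-1}, left A-linear:
   (id (x) g^{-1})(dz^i (x) dz^j (x) dz^k) = dz^i g^{jk} *)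
Definition id_ginv (X : T3) : Om :=
  fun i => \sum_(j < 4) \sum_(k < 4) X i j k * (gu j k)%:A.
Definition nabla_tens (w v : Om) : T3 :=
  addT3 (tensL (nabla w) v) (sigma_id (tensR w (nabla v))).

Definition sumO2 (F : 'I_4 -> 'I_4 -> Om) : Om :=
  fun k => \sum_(i < 4) \sum_(j < 4) F i j k.

(* g is a metric: g and g^{-1} are bimodule maps, g(1) = sum_alpha g^alpha (x) g_alpha
   with g^alpha = g_ij dz^i, g_alpha = dz^j (alpha = (i,j)), and
   sum g^{-1}(omega (x) g^alpha) g_alpha = omega = sum g^alpha g^{-1}(g_alpha (x) omega). *)
Definition is_metric : Prop :=
  [/\ [/\ forall a b, gmet (a + b) = addT (gmet a) (gmet b),
          forall a b, gmet (a * b) = lactT a (gmet b)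
        & forall a b, gmet (a * b) = ractT (gmet a) b],
      [/\ forall s t, ginv (addT s t) = ginv s + ginv t,
          forall a t, ginv (lactT a t) = a * ginv t
        & forall t b, ginv (ractT t b) = ginv t * b],
      forall w : Om,
        sumO2 (fun i j => lactO (ginv (tens w (scO (gl i j) (dz i)))) (dz j)) = w
    & forall w : Om,
        sumO2 (fun i j => ractO (scO (gl i j) (dz i)) (ginv (tens (dz j) w))) = w].

Definition is_bimodule_connection : Prop :=
  [/\ forall w v, nabla (addO w v) = addT (nabla w) (nabla v),
      forall a w, nabla (lactO a w) = addT (lactT a (nabla w)) (tens (d a) w),
      forall w a, nabla (ractO w a) = addT (ractT (nabla w) a) (sigma (tens w (d a)))
    & [/\ forall s t, sigma (addT s t) = addT (sigma s) (sigma t),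
          forall a t, sigma (lactT a t) = lactT a (sigma t),
          forall t b, sigma (ractT t b) = ractT (sigma t) b
        & bijective sigma]].

Definition is_riemannian_structure : Prop :=
  [/\ is_metric,
      is_bimodule_connection,
      forall t, ginv (sigma t) = ginv t
    & forall w v, id_ginv (nabla_tens w v) = d (ginv (tens w v))].

End Calculus.

(* Main.v *)
Require Import Defs.
From HB Require Import structures.
From mathcomp Require Import all_boot all_order all_algebra.
From mathcomp Require Import reals trigo.
From mathcomp Require Import complex.
From Stdlib Require Import FunctionalExtensionality.
Import Order.TTheory GRing.Theory Num.Theory.
Local Open Scope ring_scope.
Section K.
Variables (R : realType) (t : R).

Lemma expiV : expi t * expi (- t) = 1.
Proof.
rewrite /expi cosN sinN /GRing.mul /=.
apply/eqP; rewrite eq_complex /=.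
by rewrite mulrN opprK -!expr2 cos2Dsin2 mulrN mulrC addNr !eqxx.
Qed.

Lemma expiV' : expi (- t) * expi t = 1.
Proof. by rewrite mulrC expiV. Qed.

Definition sh (i : 'I_4) : 'I_4 := Ordinal (ltn_pmod (i + 2) (isT : (0 < 4)%N)).

Lemma Pmat_sh i j : Pmat R i j = if j == sh i then 1 else 0.
Proof. by []. Qed.

Lemma Pmat_sym i j : Pmat R i j = Pmat R j i.
Proof.
by case: i => [[|[|[|[|i]]]] Hi] //; case: j => [[|[|[|[|j]]]] Hj].
Qed.

Lemma shK i : sh (sh i) = i.
Proof. by apply: val_inj; case: i => [[|[|[|[|i]]]] Hi]. Qed.

Lemma RR_sh k i : Rth t k i * Rth t k (sh i) = 1.
Proof.
have E := expiV; have E' := expiV'.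
by case: i => [[|[|[|[|i]]]] Hi] //; case: k => [[|[|[|[|k]]]] Hk] //=;
  rewrite /Rth /= ?mul1r.
Qed.

Lemma R_sh i : Rth t i (sh i) = 1.
Proof. by case: i => [[|[|[|[|i]]]] Hi]. Qed.

Lemma R_inv k l : Rth t k l * Rth t l k = 1.
Proof.
have E := expiV; have E' := expiV'.
by case: l => [[|[|[|[|i]]]] Hi] //; case: k => [[|[|[|[|k]]]] Hk] //=;
  rewrite /Rth /= ?mul1r.
Qed.
End K.
Section S.
Variables (R : realType) (t : R) (A : algType R[i]) (z : 'I_4 -> A).
Hypothesis Hgen : generated_by z.
Variable rho : 'I_4 -> A -> A.
Hypothesis Hrho : forall i, is_alg_hom (rho i) /\
                    forall j, rho i (z j) = Rth t j i *: z j.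
Variable d : A -> Om A.
Hypothesis Hd : is_leibniz_ext rho z d.

Lemma rhoD i a b : rho i (a + b) = rho i a + rho i b.
Proof. by case: (Hrho i) => -[]. Qed.
Lemma rhoZ i c a : rho i (c *: a) = c *: rho i a.
Proof. by case: (Hrho i) => -[]. Qed.
Lemma rhoM i a b : rho i (a * b) = rho i a * rho i b.
Proof. by case: (Hrho i) => -[]. Qed.
Lemma rho1 i : rho i 1 = 1.
Proof. by case: (Hrho i) => -[]. Qed.
Lemma rhoz i j : rho i (z j) = Rth t j i *: z j.
Proof. by case: (Hrho i). Qed.
Lemma rho0 i : rho i 0 = 0.
Proof. by have := rhoZ i 0 0; rewrite !scale0r. Qed.
Lemma rhoA i c : rho i (c%:A) = c%:A.
Proof. by rewrite rhoZ rho1. Qed.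
Lemma rhoN i (b : bool) : rho i (b%:R) = b%:R.
Proof. by case: b; rewrite /= ?mulr1n ?mulr0n ?rho1 ?rho0. Qed.
Lemma rho_sum i (F : 'I_4 -> A) : rho i (\sum_(j < 4) F j) = \sum_(j < 4) rho i (F j).
Proof. exact: (big_morph (rho i) (rhoD i) (rho0 i)). Qed.

Lemma dD a b k : d (a + b) k = d a k + d b k.
Proof. by case: Hd => -[-> _] _ _. Qed.
Lemma dZ c a k : d (c *: a) k = c *: d a k.
Proof. by case: Hd => -[_ ->] _ _. Qed.
Lemma dM a b k : d (a * b) k = a * d b k + d a k * rho k b.
Proof. by case: Hd => _ -> _. Qed.
Lemma d_z i k : d (z i) k = (k == i)%:R.
Proof. by case: Hd => _ _ ->. Qed.
Lemma d0 k : d 0 k = 0.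
Proof. by have := dZ 0 0 k; rewrite !scale0r. Qed.
Lemma d1 k : d 1 k = 0.
Proof.
have H := dM 1 1 k. rewrite !mul1r in H. rewrite rho1 in H. rewrite mulr1 in H.
have : d 1 k + 0 = d 1 k + d 1 k by rewrite addr0 {1}H.
by move/addrI <-.
Qed.
Lemma dA c k : d (c%:A) k = 0.
Proof. by rewrite dZ d1 scaler0. Qed.
Lemma d_sum k (F : 'I_4 -> A) : d (\sum_(j < 4) F j) k = \sum_(j < 4) d (F j) k.
Proof. exact: (big_morph (fun a => d a k) (fun a b => dD a b k) (d0 k)). Qed.

Lemma rho_comm i j a : rho i (rho j a) = rho j (rho i a).
Proof.
move: a; apply: Hgen => [|a b IHa IHb|c a IH|k a IH].
- by rewrite !rho1.
- by rewrite !rhoD IHa IHb.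
- by rewrite !rhoZ IH.
- by rewrite !rhoM IH !rhoz !rhoZ !rhoz !scalerA mulrC.
Qed.

Lemma rho_sh i a : rho i (rho (sh i) a) = a.
Proof.
move: a; apply: Hgen => [|a b IHa IHb|c a IH|k a IH].
- by rewrite !rho1.
- by rewrite !rhoD IHa IHb.
- by rewrite !rhoZ IH.
- by rewrite !rhoM IH !rhoz !rhoZ !rhoz !scalerA mulrC RR_sh scale1r.
Qed.

Lemma d_rho l a k : d (rho l a) k = rho l (d a k) * (Rth t k l)%:A.
Proof.
move: a; apply: Hgen => [|a b IHa IHb|c a IH|j a IH].
- by rewrite rho1 !d1 rho0 mul0r.
- by rewrite rhoD !dD IHa IHb rhoD mulrDl.
- by rewrite rhoZ !dZ IH rhoZ scalerAl.
- rewrite rhoM !dM IH rhoz dZ d_z rhoD rhoM rhoM rhoz rhoN.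
  case: (eqVneq k j) => [->|ne] /=.
    rewrite mulr1n mul1r mulrDl mulrA; congr (_ + _).
    by rewrite rho_comm mulr_algr -scalerAl mul1r.
  by rewrite mulr0n scaler0 !mul0r !addr0 mulrA.
Qed.

Lemma sum_one (F : 'I_4 -> A) s : (forall i, i != s -> F i = 0) -> \sum_(i < 4) F i = F s.
Proof. by move=> H; rewrite (bigD1 s) //= big1 ?addr0 // => i /H. Qed.

Lemma gl_sh i j : @gl R i j = if j == sh i then 2^-1 else 0 :> R[i].
Proof. by rewrite /gl Pmat_sh; case: eqP; rewrite ?mulr1 ?mulr0. Qed.
Lemma gu_sh i j : @gu R i j = if j == sh i then 2 else 0 :> R[i].
Proof. by rewrite /gu Pmat_sh; case: eqP; rewrite ?mulr1 ?mulr0. Qed.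
Lemma gu_sym i j : @gu R i j = @gu R j i :> R[i].
Proof. by rewrite /gu Pmat_sym. Qed.

Lemma ginv_sh (T : T2 A) : ginv (@gu R) T = \sum_(p < 4) T p (sh p) * 2%:A.
Proof.
rewrite /ginv; apply: eq_bigr => p _.
rewrite (sum_one _ (sh p)) ?gu_sh ?eqxx //.
move=> j /negbTE H. rewrite gu_sh H.
by rewrite scale0r mulr0.
Qed.

Lemma two_neq0 : (2 : R[i]) != 0.
Proof. by rewrite pnatr_eq0. Qed.

Lemma half_two : (2^-1 *: 1 : A) * 2%:A = 1.
Proof. by rewrite -scalerAl mul1r scalerA mulVf ?two_neq0 // scale1r. Qed.

Lemma metric_ok : is_metric rho (@gl R) (@gu R).
Proof.
split.
- split=> a b; apply: functional_extensionality => i; apply: functional_extensionality => j.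
  + by rewrite /gmet /addT mulrDl.
  + by rewrite /gmet /lactT mulrA.
  rewrite /gmet /ractT gl_sh; case: eqP => [->|_].
    by rewrite rho_sh !mulr_algr scalerAl.
  by rewrite scale0r !mulr0 mul0r.
- split.
  + move=> s T; rewrite /ginv -big_split; apply: eq_bigr => i _.
    by rewrite -big_split; apply: eq_bigr => j _; rewrite mulrDl.
  + move=> a T; rewrite /ginv mulr_sumr; apply: eq_bigr => i _.
    by rewrite mulr_sumr; apply: eq_bigr => j _; rewrite mulrA.
  + move=> T b; rewrite !ginv_sh mulr_suml; apply: eq_bigr => i _.
    by rewrite /ractT rho_sh !mulr_algr scalerAl.
- move=> w; apply: functional_extensionality => k.
  rewrite /sumO2 /lactO.
  rewrite (eq_bigr (fun i => ginv (@gu R) (tens rho w (scO (@gl R i k) (dz A i))))); last first.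
    move=> i _; rewrite (sum_one _ k) /dz ?eqxx ?mulr1 // => j.
    by rewrite eq_sym => /negbTE ->; rewrite mulr0.
  under eq_bigr => i _ do rewrite ginv_sh.
  rewrite exchange_big /=.
  rewrite (sum_one _ k) => [|p ne].
    rewrite (sum_one _ (sh k)) => [|i ne].
      rewrite /tens /scO /dz eqxx /= mulr1n rhoZ rho1 gl_sh shK eqxx.
      by rewrite -mulrA half_two mulr1.
    by rewrite /tens /scO /dz eq_sym (negbTE ne) /= mulr0n scaler0 rho0 mulr0 mul0r.
  apply: big1 => i _; rewrite /tens /scO /dz.
  case: eqP => [<-|_]; last by rewrite /= mulr0n scaler0 rho0 mulr0 mul0r.
  by rewrite gl_sh shK eq_sym (negbTE ne) scale0r rho0 mulr0 mul0r.
- move=> w; apply: functional_extensionality => k.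
  rewrite /sumO2 /ractO /scO.
  rewrite (sum_one _ k) => [|i ne]; last first.
    by apply: big1 => j _; rewrite /dz eq_sym (negbTE ne) /= mulr0n scaler0 mul0r.
  rewrite (sum_one _ (sh k)) => [|j ne]; last by rewrite gl_sh (negbTE ne) scale0r mul0r.
  rewrite gl_sh eqxx /dz eqxx /= mulr1n.
  rewrite ginv_sh (sum_one _ (sh k)) => [|p ne]; last first.
    by rewrite /tens (negbTE ne) /= mulr0n !mul0r.
  rewrite /tens eqxx shK /= mulr1n mul1r rhoM rho_sh rhoA.
  by rewrite -scalerAl mul1r mulr_algr scalerA mulVf ?two_neq0 // scale1r.
Qed.

Lemma nabla_E w k l : nabla rho d w k l = d (w l) k.
Proof.
rewrite /nabla (sum_one _ l) /tens /dz ?eqxx /= ?mulr1n ?rho1 ?mulr1 // => i ne.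
by rewrite eq_sym (negbTE ne) /= mulr0n rho0 mulr0.
Qed.

Ltac fe := apply: functional_extensionality => ?; apply: functional_extensionality => ?.

Lemma conn_ok : is_bimodule_connection rho (Rth t) d.
Proof.
split.
- by move=> w v; fe; rewrite /addT !nabla_E /addO dD.
- by move=> a w; fe; rewrite /addT /lactT /lactO !nabla_E dM.
- move=> w a; fe; rewrite /addT /ractT /ractO /sigma /tens !nabla_E dM d_rho.
  by rewrite addrC mulrA.
split.
- by move=> s T; fe; rewrite /sigma /addT mulrDl.
- by move=> a T; fe; rewrite /sigma /lactT mulrA.
- by move=> T b; fe; rewrite /sigma /ractT !mulr_algr scalerAl rho_comm.
- exists (sigma (Rth t)) => T; fe; by rewrite /sigma !mulr_algr scalerA R_inv scale1r.
Qed.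

Lemma ginv_sigma (T : T2 A) : ginv (@gu R) (sigma (Rth t) T) = ginv (@gu R) T.
Proof.
rewrite !ginv_sh [RHS](reindex_inj (can_inj shK)); apply: eq_bigr => p _.
by rewrite /sigma shK R_sh scale1r mulr1.
Qed.

Lemma torsion_ok w v : id_ginv (@gu R) (nabla_tens rho (Rth t) d w v) = d (ginv (@gu R) (tens rho w v)).
Proof.
apply: functional_extensionality => i.
rewrite /id_ginv /ginv d_sum; apply: eq_bigr => j _.
rewrite d_sum; apply: eq_bigr => k _.
rewrite /nabla_tens /addT3 /tensL /tensR /sigma_id !nabla_E.
rewrite [in RHS]mulr_algr dZ dM d_rho mulr_algr.
by rewrite addrC mulrA.
Qed.
End S.

Theorem proposition4p4 (R : realType) (theta : R)
  (A : algType R[i]) (z : 'I_4 -> A)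
  (HA : is_presentation (Rth theta) z)
  (Hgen : generated_by z)
  (rho : 'I_4 -> A -> A)
  (Hrho : forall i, is_alg_hom (rho i) /\
                    forall j, rho i (z j) = Rth theta j i *: z j)
  (d : A -> Om A)
  (Hd : is_leibniz_ext rho z d) :
  is_riemannian_structure rho (Rth theta) (@gl R) (@gu R) d.
Proof.
split.
- exact: (@metric_ok R theta A z Hgen rho Hrho).
- exact: (@conn_ok R theta A z Hgen rho Hrho d Hd).
- exact: ginv_sigma.
- exact: (@torsion_ok R theta A z Hgen rho Hrho d Hd).
Qed.
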